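(* Let $e_1,\dots,e_n>0$ with $\sum_ie_i=1$ and fix the reported demands of all agents other than $i$. Let $a_i$ and $a_i'$ be agent $i$'s MMF allocations when she reports $d_i$ and $d_i'$ respectively. If $d_i<d_i'$, then $a_i\le a_i'$, with equality only when agent $i$ is allocated in the saturating step (rather than being allocated her reported demand) under both reports.
   Context: MMF$(e,d)$: set $r=1$, $E=1$, $S=\{1,\dots,n\}$, $a=0$; process agents $j$ in ascending order of $d_j/e_j$; if $d_j<re_j/E$, set $a_j=d_j$ (agent $j$ is ''allocated her reported demand''), remove $j$ from $S$, $r\leftarrow r-d_j$, $E\leftarrow E-e_j$ and continue; otherwise (the ''saturating step'') set $a_k=re_k/E$ for all $k\in S$ and stop; output $a$. *)

(* Defs.v *)
From mathcomp Require Import all_boot all_order all_algebra.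
Set Implicit Arguments. Unset Strict Implicit. Unset Printing Implicit Defensive.
Import Order.TTheory GRing.Theory Num.Theory.
Local Open Scope ring_scope.

Section MMF.
Variables (R : realFieldType) (n : nat) (e d : 'I_n -> R).

(* Processing order: ascending d_j / e_j; ties broken by agent index
   (mathcomp's sort is stable on enum 'I_n). *)
Definition mmf_order : seq 'I_n :=
  sort (fun j k : 'I_n => d j / e j <= d k / e k) (enum 'I_n).

(* mmf_aux l r E k = (a_k, b_k) where l is the list of still-unprocessed
   agents (the set S, in processing order), r the remaining resource, E the
   remaining endowment; b_k = true iff k is allocated in the saturating step. *)
Fixpoint mmf_aux (l : seq 'I_n) (r E : R) : 'I_n -> R * bool :=
  match l with
  | [::] => fun _ => (0, false)
  | j :: l' =>
      if d j < r * e j / E then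
        fun k => if k == j then (d j, false)
                 else mmf_aux l' (r - d j) (E - e j) k
      else fun k => (r * e k / E, true)
  end.

Definition MMF (k : 'I_n) : R := (mmf_aux mmf_order 1 1 k).1.
Definition MMF_saturated (k : 'I_n) : bool := (mmf_aux mmf_order 1 1 k).2.
End MMF.

Definition upd (R : Type) (n : nat) (d : 'I_n -> R) (i : 'I_n) (x : R) : 'I_n -> R :=
  fun j => if j == i then x else d j.

(* Main.v *)
Require Import Defs.
From mathcomp Require Import all_boot all_order all_algebra.
From mathcomp Require Import lra.
Import Order.TTheory GRing.Theory Num.Theory.
Local Open Scope ring_scope.

Lemma sum_pos_mem (R : realFieldType) (n : nat) (e : 'I_n -> R) :
  (forall j, 0 < e j) -> forall (l : seq 'I_n) k, k \in l -> 0 < \sum_(j <- l) e j.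
Proof.
move=> he; elim=> [|j l IH] k //; rewrite in_cons big_cons => /orP [_|kl].
  by rewrite ltr_wpDr // sumr_ge0 // => x _; apply/ltW.
by rewrite ltr_wpDl ?(ltW (he j)) // (IH k).
Qed.

Lemma aux_char (R : realFieldType) (n : nat) (e d : 'I_n -> R) :
  (forall j, 0 < e j) -> forall (l : seq 'I_n) r E,
  sorted (fun j k : 'I_n => d j / e j <= d k / e k) l -> 0 < r ->
  E = \sum_(k <- l) e k ->
  (\sum_(k <- l) d k < r /\ forall k, k \in l -> mmf_aux e d l r E k = (d k, false))
  \/ (exists lam, \sum_(k <- l) Num.min (d k) (lam * e k) = r /\
        (exists2 k, k \in l & lam * e k <= d k) /\
        forall k, k \in l -> mmf_aux e d l r E k =
           (Num.min (d k) (lam * e k), lam * e k <= d k)).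
Proof.
move=> he; elim=> [|j l IH] r E srt rpos HE.
  by left; rewrite big_nil.
have Epos : 0 < E by rewrite HE (@sum_pos_mem _ _ e he _ _ (mem_head j l)).
have allj : all (fun k => d j / e j <= d k / e k) l.
  apply: order_path_min srt => x y z; exact: le_trans.
have srt' : sorted (fun j k : 'I_n => d j / e j <= d k / e k) l.
  exact: path_sorted srt.
have ej := he j.
rewrite big_cons in HE.
have Hle : forall k, k \in l -> forall lam, lam <= d j / e j -> lam * e k <= d k.
  move=> k kl lam hl; have := allP allj k kl => /= hk.
  by rewrite -ler_pdivlMr // (le_trans hl hk).
case: (boolP (d j < r * e j / E)) => cond; last first.
  have cond' := cond; rewrite -leNgt in cond'.
  right; exists (r / E); split; last split.
  - rewrite big_cons.
    have H1 : forall k, k \in j :: l -> Num.min (d k) (r / E * e k) = r / E * e k.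
      move=> k; rewrite in_cons => /orP [/eqP->|kl].
        by apply/min_r; rewrite mulrAC; lra.
      apply/min_r; apply: Hle => //; rewrite ler_pdivlMr // mulrAC; lra.
    rewrite H1 ?mem_head // (eq_big_seq (fun k => r / E * e k)); last first.
      by move=> k kl; rewrite H1 // in_cons kl orbT.
    by rewrite -mulr_sumr -mulrDr -HE mulrVK // unitfE gt_eqF.
  - exists j; first exact: mem_head.
    by rewrite mulrAC; lra.
  move=> k kk; rewrite /= (negbTE cond).
  have hk : r / E * e k <= d k.
    move: kk; rewrite in_cons => /orP [/eqP->|kl].
      by rewrite mulrAC; lra.
    apply: Hle => //; rewrite ler_pdivlMr // mulrAC; lra.
  by rewrite hk (min_r hk) mulrAC.
have rpos' : 0 < r - d j.
  have : r * e j / E <= r.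
    rewrite ler_pdivrMr // ler_pM2l // HE lerDl sumr_ge0 // => x _; exact/ltW.
  lra.
have HE' : E - e j = \sum_(k <- l) e k by rewrite HE; lra.
case: (IH (r - d j) (E - e j) srt' rpos' HE') => [[Hs Hk]|[lam [Hs [[k0 k0l Hk0] Hk]]]].
  left; split; first by rewrite big_cons; lra.
  move=> k kk; rewrite /= cond; case: eqP => [->//|/eqP kj].
  by apply: Hk; move: kk; rewrite in_cons (negbTE kj).
have E'pos : 0 < E - e j by rewrite HE' (@sum_pos_mem _ _ e he _ _ k0l).
have djlt : d j < lam * e j.
  rewrite ltNge; apply/negP => hlj.
  have hlam : lam <= d j / e j by rewrite ler_pdivlMr.
  have : \sum_(k <- l) Num.min (d k) (lam * e k) = lam * (E - e j).
    rewrite HE' mulr_sumr; apply: eq_big_seq => k kl; apply/min_r; exact: Hle.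
  rewrite Hs => H2.
  move: cond; rewrite ltr_pdivlMr // => cond.
  have : lam * e j * (E - e j) <= d j * (E - e j) by rewrite ler_pM2r.
  nra.
right; exists lam; split; last split.
- by rewrite big_cons Hs (min_l (ltW djlt)); lra.
- by exists k0 => //; rewrite in_cons k0l orbT.
move=> k kk; rewrite /= cond; case: eqP => [->|/eqP kj].
  by rewrite (min_l (ltW djlt)) leNgt djlt.
by apply: Hk; move: kk; rewrite in_cons (negbTE kj).
Qed.

Lemma mmf_char (R : realFieldType) (n : nat) (e d : 'I_n -> R) :
  (forall j, 0 < e j) -> \sum_j e j = 1 ->
  (\sum_k d k < 1 /\ forall k, MMF e d k = d k /\ MMF_saturated e d k = false)
  \/ (exists lam, \sum_k Num.min (d k) (lam * e k) = 1 /\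
        (exists k, lam * e k <= d k) /\
        forall k, MMF e d k = Num.min (d k) (lam * e k) /\
                  MMF_saturated e d k = (lam * e k <= d k)).
Proof.
move=> he hs.
have srt : sorted (fun j k : 'I_n => d j / e j <= d k / e k) (mmf_order e d).
  by apply: sort_sorted => x y; exact: le_total.
have pe : perm_eq (mmf_order e d) (enum 'I_n) by rewrite /mmf_order perm_sort.
have bs : forall F : 'I_n -> R, \sum_(k <- mmf_order e d) F k = \sum_k F k.
  by move=> F; rewrite (perm_big _ pe) big_enum.
have mem : forall k, k \in mmf_order e d by move=> k; rewrite mem_sort mem_enum.
have := @aux_char R n e d he (mmf_order e d) 1 1 srt ltr01.
rewrite bs hs => /(_ erefl) [[Hs Hk]|[lam [Hs [[k0 _ Hk0] Hk]]]].
  left; split; first by rewrite -bs.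
  by move=> k; rewrite /MMF /MMF_saturated Hk.
right; exists lam; split; first by rewrite -bs.
split; first by exists k0.
by move=> k; rewrite /MMF /MMF_saturated Hk.
Qed.

Lemma sum_eq_le (R : realFieldType) (n : nat) (f g : 'I_n -> R) :
  (forall k, f k <= g k) -> \sum_k g k <= \sum_k f k -> forall k, f k = g k.
Proof.
move=> hfg hs k.
have h0 : \sum_k (g k - f k) = 0.
  apply/eqP; rewrite eq_le sumr_ge0 ?andbT; last by move=> x _; rewrite subr_ge0.
  by rewrite sumrB subr_le0.
have := @psumr_eq0P R _ predT (fun x => g x - f x) (fun x _ => ltac:(rewrite subr_ge0; exact: hfg)) h0 k isT.
by move/eqP; rewrite subr_eq0 => /eqP.
Qed.

Theorem mainTheorem16 (R : realFieldType) (n : nat) (e d : 'I_n -> R)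
  (i : 'I_n) (di di' : R) :
  (forall j, 0 < e j) -> \sum_j e j = 1 ->
  (forall j, 0 <= d j) -> 0 <= di -> di < di' ->
  MMF e (upd d i di) i <= MMF e (upd d i di') i /\
  (MMF e (upd d i di) i = MMF e (upd d i di') i ->
     MMF_saturated e (upd d i di) i /\ MMF_saturated e (upd d i di') i).
Proof.
move=> he hs hd hdi hlt.
set D := upd d i di; set D' := upd d i di'.
have Di : D i = di by rewrite /D /upd eqxx.
have D'i : D' i = di' by rewrite /D' /upd eqxx.
have Dk : forall k, k != i -> D' k = D k by move=> k /negbTE ki; rewrite /D /D' /upd ki.
have DD' : forall k, D k <= D' k.
  move=> k; case: (eqVneq k i) => [->|ki]; first by rewrite Di D'i ltW.
  by rewrite Dk.
have ei := he i.
suff strict : MMF e D i < MMF e D' i \/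
   (MMF e D i <= MMF e D' i /\ (MMF e D i = MMF e D' i ->
     MMF_saturated e D i /\ MMF_saturated e D' i)).
  case: strict => [h|//]; split; first exact: ltW.
  by move=> heq; move: h; rewrite heq ltxx.
case: (@mmf_char _ _ e D he hs) => [[Hs Hk]|[lam [Hs [[k0 Hk0] Hk]]]].
  left; rewrite (Hk i).1 Di.
  case: (@mmf_char _ _ e D' he hs) => [[Hs' Hk']|[lam' [Hs' [_ Hk']]]].
    by rewrite (Hk' i).1 D'i.
  rewrite (Hk' i).1 ltNge; apply/negP => hle.
  suff : \sum_k Num.min (D' k) (lam' * e k) <= \sum_k D k by rewrite Hs'; lra.
  apply: ler_sum => k _; case: (eqVneq k i) => [->|ki]; first by rewrite Di.
  by rewrite -(Dk k ki) ge_min lexx.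
case: (@mmf_char _ _ e D' he hs) => [[Hs' _]|[lam' [Hs' [_ Hk']]]].
  exfalso; suff : \sum_k Num.min (D k) (lam * e k) <= \sum_k D' k by rewrite Hs; lra.
  apply: ler_sum => k _; by apply: le_trans (DD' k); rewrite ge_min lexx.
rewrite (Hk i).1 (Hk' i).1 (Hk i).2 (Hk' i).2 Di D'i.
case: (boolP (lam * e i <= di)) => fi.
  right.
  have llam : lam <= lam'.
    rewrite leNgt; apply/negP => hl.
    have hle : forall k, Num.min (D' k) (lam' * e k) <= Num.min (D k) (lam * e k).
      move=> k; rewrite le_min !ge_min; apply/andP; split.
        by case: (eqVneq k i) => [->|ki]; [rewrite D'i Di; nra | rewrite Dk // lexx].
      by apply/orP; right; rewrite ler_pM2r // ltW.
    have := @sum_eq_le _ _ _ _ hle; rewrite Hs Hs' lexx => /(_ isT i).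
    rewrite Di D'i (min_r fi) => heq.
    have : Num.min di' (lam' * e i) <= lam' * e i by rewrite ge_min lexx orbT.
    rewrite heq; nra.
  have h1 : lam * e i <= lam' * e i by rewrite ler_pM2r.
  rewrite (min_r fi); split.
    by rewrite le_min h1 andbT; lra.
  move=> heq; split => //.
  case: (lerP (lam' * e i) di') => // hc.
  by move: heq; rewrite (min_l (ltW hc)); lra.
left; rewrite -ltNge in fi; rewrite (min_l (ltW fi)).
rewrite ltNge; apply/negP => hle.
have hmin : Num.min di' (lam' * e i) = lam' * e i.
  apply: min_r; move: hle; rewrite ge_min; case/orP => h; first lra.
  lra.
have hl : lam' < lam.
  rewrite hmin in hle; rewrite -(ltr_pM2r ei); lra.
have hle2 : forall k, Num.min (D' k) (lam' * e k) <= Num.min (D k) (lam * e k).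
  move=> k; case: (eqVneq k i) => [->|ki].
    by rewrite D'i Di (min_l (ltW fi)).
  rewrite Dk // le_min !ge_min lexx /=; apply/orP; right.
  by rewrite ler_pM2r // ltW.
have := @sum_eq_le _ _ _ _ hle2; rewrite Hs Hs' lexx => /(_ isT k0) heq.
have k0i : k0 != i by apply/eqP => ek; move: Hk0; rewrite ek Di; lra.
move: heq; rewrite (Dk _ k0i) (min_r Hk0) => heq.
have : Num.min (D k0) (lam' * e k0) <= lam' * e k0 by rewrite ge_min lexx orbT.
have := he k0.
rewrite heq => ek0 h; have : lam * e k0 <= lam' * e k0 := h.
rewrite ler_pM2r // => h'; lra.
Qed.
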